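(* Let $\mathbf V$ be a monoid variety satisfying the identity $x^n\approx x^{n+1}$ for some $n\in\mathbb N$. If $M_\gamma(xx^+yy^+)\notin\mathbf V$, then $\mathbf V$ satisfies the identity $x^ny^n\approx (x^ny^n)^n$.
   Context: Words are elements of the free monoid $\mathfrak X^\ast$ over a countably infinite alphabet $\mathfrak X$. For a word $\mathbf w$, a letter is simple in $\mathbf w$ if it occurs exactly once. The congruence $\gamma$ on $\mathfrak X^\ast$ is defined by: $\mathbf u\mathrel\gamma\mathbf v$ iff $\mathbf u$ and $\mathbf v$ have the same set of simple letters and $\mathbf u$ can be obtained from $\mathbf v$ by changing the individual exponents of letters (i.e. $\mathbf u=x_1^{e_1}\cdots x_r^{e_r}$, $\mathbf v=x_1^{f_1}\cdots x_r^{f_r}$ with letters $x_i$ and $e_i,f_i\ge1$). For $\gamma$-classes $\mathtt u,\mathtt v$ write $\mathtt v\le\mathtt u$ if $\mathtt u=\mathtt p\mathtt v\mathtt s$ for some $\gamma$-classes $\mathtt p,\mathtt s$. For a set $\mathtt W$ of $\gamma$-classes, $M_\gamma(\mathtt W)$ is the Rees quotient of $\mathfrak X^\ast/\gamma$ by the ideal of all $\gamma$-classes not $\le$ any member of $\mathtt W$. $\gamma$-classes are written as regular expressions with $x^+=\{x^k\mid k\ge1\}$; thus $xx^+yy^+$ is the $\gamma$-class of $x^2y^2$, namely $\{x^ay^b\mid a,b\ge2\}$, and $M_\gamma(xx^+yy^+)=M_\gamma(\{xx^+yy^+\})$. *)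

(* Defs.v *)
From Stdlib Require Import ClassicalEpsilon.
From mathcomp Require Import all_boot.
Set Implicit Arguments. Unset Strict Implicit. Unset Printing Implicit Defensive.

Definition word := seq nat.
Definition identity := (word * word)%type.

Record magma := Magma { mcar :> Type; mop : mcar -> mcar -> mcar; munit : mcar }.

Definition is_monoid (M : magma) : Prop :=
  (forall a b c : M, mop a (mop b c) = mop (mop a b) c) /\
  (forall a : M, mop (munit M) a = a) /\ (forall a : M, mop a (munit M) = a).

Definition ev (M : magma) (f : nat -> M) (w : word) : M :=
  foldr (fun x m => mop (f x) m) (munit M) w.

Definition sat (M : magma) (i : identity) : Prop :=
  forall f : nat -> M, ev f i.1 = ev f i.2.

(* The monoid variety defined by a set Sigma of identities (by Birkhoff's
   theorem every monoid variety is of this form). *)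
Definition inV (Sigma : identity -> Prop) (M : magma) : Prop :=
  is_monoid M /\ forall i, Sigma i -> sat M i.

Definition Vsat (Sigma : identity -> Prop) (i : identity) : Prop :=
  forall M : magma, inV Sigma M -> sat M i.

Definition simple (x : nat) (w : word) : bool := count_mem x w == 1.

Definition expand (xs es : seq nat) : word :=
  flatten [seq nseq p.2 p.1 | p <- zip xs es].

Definition gamma (u v : word) : Prop :=
  (forall x, simple x u = simple x v) /\
  exists xs es fs : seq nat,
    size es = size xs /\ size fs = size xs /\
    all (fun e => 0 < e) es /\ all (fun e => 0 < e) fs /\
    u = expand xs es /\ v = expand xs fs.

(* W : a set of gamma-classes, given as a predicate on words (a class is
   in W iff its representatives satisfy W).  The class of w is <= some
   member of W iff class(t) = class(p) class(w) class(s) = class(p w s)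
   for some words p, s and some t in W. *)
Definition below (W : word -> Prop) (w : word) : Prop :=
  exists p s t : word, W t /\ gamma (p ++ w ++ s) t.

(* maximal runs (letter, length) of a word *)
Definition runs (w : word) : seq (nat * nat) :=
  foldr (fun x r => match r with
                    | (y, k) :: r' => if x == y then (y, k.+1) :: r' else (x, 1) :: r
                    | [::] => [:: (x, 1)]
                    end) [::] w.

(* norm w: every maximal run x^k of w replaced by x if x is simple in w and
   by x^2 otherwise.  norm w is gamma-equivalent to w, and u gamma v iff
   norm u = norm v; so norm-fixed words are canonical representatives of
   gamma-classes. *)
Definition norm (w : word) : word :=
  flatten [seq nseq (if simple p.1 w then 1 else 2) p.1 | p <- runs w].

(* Elements: None = 0, Some c = the gamma-class with canonical representative
   c, for classes <= some member of W. *)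
Definition Mg_car (W : word -> Prop) : Type :=
  option {w : word | norm w = w /\ below W w}.

Definition Mg_cls (W : word -> Prop) (c : word) : Mg_car W :=
  match excluded_middle_informative (norm c = c /\ below W c) with
  | left H => Some (exist _ c H)
  | right _ => None
  end.

Definition Mg_mul (W : word -> Prop) (a b : Mg_car W) : Mg_car W :=
  match a, b with
  | Some a, Some b => Mg_cls W (norm (proj1_sig a ++ proj1_sig b))
  | _, _ => None
  end.

(* identity: the class of the empty word (equal to 0 iff W is empty) *)
Definition Mgamma (W : word -> Prop) : magma :=
  @Magma (Mg_car W) (@Mg_mul W) (Mg_cls W [::]).

(* letters x := 0, y := 1 *)
(* xx^+yy^+ : the gamma-class of x^2 y^2 *)
Definition W_xxyy : word -> Prop := gamma [:: 0; 0; 1; 1].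

Definition wpow (w : word) (n : nat) : word := flatten (nseq n w).

(* Main.v *)
From Pilot Require Import Defs.
From mathcomp Require Import all_boot.
From Stdlib Require Import Classical ProofIrrelevance ClassicalEpsilon.
From mathcomp Require Import zify.
Set Implicit Arguments. Unset Strict Implicit.


Definition mpow (M : magma) (x : M) (k : nat) : M := iter k (mop x) (munit M).

Lemma mpowS (M : magma) (x : M) k : mpow x k.+1 = mop x (mpow x k).
Proof. by []. Qed.

Lemma ev_cons (M : magma) (f : nat -> M) z w : ev f (z :: w) = mop (f z) (ev f w).
Proof. by []. Qed.

Lemma ev_nil (M : magma) (f : nat -> M) : ev f [::] = munit M.
Proof. by []. Qed.

Lemma ev_cat (M : magma) (HM : is_monoid M) (f : nat -> M) a b :
  ev f (a ++ b) = mop (ev f a) (ev f b).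
Proof.
case: HM => [As [L R]]; elim: a => [|z a IH]; first by rewrite ev_nil L.
by rewrite cat_cons !ev_cons IH As.
Qed.

Lemma eq_ev (M : magma) (f g : nat -> M) w : (forall z, f z = g z) -> ev f w = ev g w.
Proof. by move=> H; elim: w => [|z w IH] //; rewrite !ev_cons IH H. Qed.

Lemma ev_flat (M : magma) (HM : is_monoid M) (k : nat -> M) (s : nat -> word) w :
  ev k (flatten (map s w)) = ev (fun z => ev k (s z)) w.
Proof.
elim: w => [|z w IH] //.
by rewrite map_cons [flatten _]/= ev_cat // IH ev_cons.
Qed.

Lemma ev_nseq (M : magma) (f : nat -> M) k z : ev f (nseq k z) = mpow (f z) k.
Proof. by elim: k => [|k IH] //; rewrite mpowS -IH. Qed.

Lemma ev_wpow (M : magma) (HM : is_monoid M) (f : nat -> M) w k :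
  ev f (wpow w k) = mpow (ev f w) k.
Proof.
rewrite /wpow; elim: k => [|k IH] //.
by rewrite /= ev_cat // IH.
Qed.


Lemma mpowD (M : magma) (HM : is_monoid M) (x : M) a b :
  mpow x (a + b) = mop (mpow x a) (mpow x b).
Proof.
case: HM => [As [L R]]; elim: a => [|a IH]; first by rewrite add0n L.
by rewrite addSn !mpowS IH As.
Qed.

Lemma mpowM (M : magma) (HM : is_monoid M) (x : M) a b :
  mpow x (a * b) = mpow (mpow x a) b.
Proof.
elim: b => [|b IH]; first by rewrite muln0.
by rewrite mulnS mpowD // IH mpowS.
Qed.

Lemma mpow1 (M : magma) (HM : is_monoid M) (x : M) : mpow x 1 = x.
Proof. by case: HM => [As [L R]]; rewrite mpowS R. Qed.

Lemma mpow_unit (M : magma) (HM : is_monoid M) k : mpow (munit M) k = munit M.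
Proof. by case: HM => [As [L R]]; elim: k => [|k IH] //; rewrite mpowS IH L. Qed.

Lemma mpow_stable (M : magma) (HM : is_monoid M) (x : M) n :
  mpow x n = mpow x n.+1 -> forall j, mpow x (n + j) = mpow x n.
Proof.
move=> H; elim=> [|j IH]; first by rewrite addn0.
have -> : n + j.+1 = n.+1 + j by rewrite addnS.
by rewrite mpowD // -H -mpowD.
Qed.

Lemma mpow_ge (M : magma) (HM : is_monoid M) (x : M) n m :
  mpow x n = mpow x n.+1 -> n <= m -> mpow x m = mpow x n.
Proof. by move=> H /subnKC <-; rewrite mpow_stable. Qed.

Lemma mpow_shift (M : magma) (HM : is_monoid M) (x y : M) b :
  mop x (mpow (mop y x) b) = mop (mpow (mop x y) b) x.
Proof.
case: HM => [As [L R]]; elim: b => [|b IH]; first by rewrite /= L R.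
by rewrite !mpowS As (As x y x) -(As (mop x y) x) IH As.
Qed.

Lemma mpowSr (M : magma) (HM : is_monoid M) (x : M) b : mpow x b.+1 = mop (mpow x b) x.
Proof. by rewrite -addn1 mpowD // mpow1. Qed.

Lemma mpow_collapse (M : magma) (HM : is_monoid M) (x : M) n k :
  mpow x n = mpow x n.+1 -> 2 <= k -> x = mpow x k -> x = mpow x n.
Proof.
move=> Hs Hk Hx.
have E : forall m, x = mpow x (1 + m * k.-1).
  elim=> [|m IH]; first by rewrite mul0n addn0 mpow1.
  have -> : 1 + m.+1 * k.-1 = (1 + m * k.-1) + k.-1 by rewrite mulSn; lia.
  rewrite mpowD // -IH -mpowS.
  by have -> : k.-1.+1 = k by lia.
rewrite {1}(E n) (mpow_ge HM Hs) //.
have : 1 <= k.-1 by lia.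
move: (k.-1) => j Hj; nia.
Qed.


Inductive t3 := N0 | N1 | N2.
Definition add3 a b := match a, b with N0, b => b | a, N0 => a | _, _ => N2 end.
Definition pos3 a := if a is N0 then false else true.
Definition cap3 (k : nat) := match k with 0 => N0 | 1 => N1 | _ => N2 end.
Definition t3n a := match a with N0 => 0 | N1 => 1 | N2 => 2 end.
Definition T := option (t3 * t3).
Definition mulT (s t : T) : T := match s, t with
 | Some (i,j), Some (k,l) => if pos3 j && pos3 k then None else Some (add3 i k, add3 j l)
 | _, _ => None end.
Definition oneT : T := Some (N0, N0).
Definition TM : magma := @Pilot.Defs.Magma T mulT oneT.

Lemma TM_monoid : is_monoid TM.
Proof.
split; last split.
- by move=> [[[] []]|] [[[] []]|] [[[] []]|].
- by move=> [[[] []]|].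
- by move=> [[[] []]|].
Qed.

Definition gen (z : nat) : T := if z == 0 then Some (N1, N0) else if z == 1 then Some (N0, N1) else None.
Definition cW (w : word) : T := ev (M:=TM) gen w.
Definition sig (t : T) : word := match t with None => [:: 1; 0]
  | Some (i, j) => nseq (t3n i) 0 ++ nseq (t3n j) 1 end.

Lemma cW_cons z w : cW (z :: w) = mulT (gen z) (cW w).
Proof. by []. Qed.

Lemma cW_sig t : cW (sig t) = t.
Proof. by case: t => [[[] []]|]. Qed.

Lemma sig01 t : all (fun z => z <= 1) (sig t).
Proof. by case: t => [[[] []]|]. Qed.

Lemma cap3S c : cap3 c.+1 = add3 N1 (cap3 c).
Proof. by case: c => [|[|c]]. Qed.

Lemma L2 w i j : cW w = Some (i, j) ->
  i = cap3 (count_mem 0 w) /\ j = cap3 (count_mem 1 w).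
Proof.
elim: w i j => [|z w IH] i j; first by rewrite /cW /= => -[<- <-].
rewrite cW_cons; case E: (cW w) => [[i' j']|]; last by case: (gen z) => [[? ?]|].
have [-> ->] := IH _ _ E.
case: z => [|[|z]] /=.
- rewrite /gen /= add0n; move: (count_mem 0 w) (count_mem 1 w) => a b.

  by case: b => [|[|b]]; case: a => [|[|a]] //= [<- <-].
- rewrite /gen /= add0n; move: (count_mem 0 w) (count_mem 1 w) => a b.
  by case: b => [|[|b]]; case: a => [|[|a]] //= [<- <-].
- by rewrite /gen.
Qed.

Lemma L3 w : all (fun z => z <= 1) w -> cW w = None -> 0 < count_mem 0 w.
Proof.
elim: w => [|z w IH]; first by rewrite /cW.
rewrite [all _ _]/= => /andP [Hz Hw]; rewrite cW_cons.
case: z Hz => [|[|z]] // _.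
case E: (cW w) => [[i' j']|]; last by move=> _; apply: IH.
have [Ei _] := L2 E; clear E; rewrite /gen /=.
by case: i' Ei => //= Ei _; move: Ei; case: (count_mem 0 w).
Qed.

Definition isNone (t : T) := if t is None then true else false.

Lemma AB (M : magma) (HM : is_monoid M) (X Y : M) :
  mop X X = X -> mop Y Y = Y ->
  forall w, all (fun z => z <= 1) w ->
  exists a b, mop X (mop (ev (fun z => if z == 0 then X else Y) w) Y) = mpow (mop X Y) a.+1
   /\ mop Y (mop (ev (fun z => if z == 0 then X else Y) w) Y) = mop (mpow (mop Y X) b) Y
   /\ isNone (cW w) = (0 < a) /\ (0 < count_mem 0 w) = (0 < b).
Proof.
have HM' := HM; case: HM' => [As [L R]] HX HY.
elim=> [|z w IH].
  move=> _; exists 0, 0; rewrite ev_nil !L (mpow1 HM).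
  split; first by []. split; last by [].
  by [].
rewrite [all _ _]/= => /andP [Hz Hw]; have [a [b [HA [HB [Ha Hb]]]]] := IH Hw.
rewrite ev_cons cW_cons.
case: z Hz => [|[|z]] // _.
- rewrite eqxx; exists a, a.+1; split; first by rewrite -(As X) As HX.
  split; first by rewrite -(As X) HA mpow_shift.
  split=> //; rewrite -Ha /gen /=; by case: (cW w) => [[i' j']|].
- have -> : (1 == 0) = false by [].
  exists b, b; split.
    by rewrite -(As Y) HB As mpow_shift // -As -mpowSr.
  split; first by rewrite -(As Y) As HY.
  split=> //; rewrite -Hb /gen /=.
  case E: (cW w) => [[i' j']|] /=; last by rewrite (L3 Hw E).
  have [Ei _] := L2 E; clear E; rewrite Ei; by case: (count_mem 0 w) => [|[|c]].
Qed.


Lemma ev_count (M : magma) (HM : is_monoid M) (z : M) x w :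
  ev (fun y => if y == x then z else munit M) w = mpow z (count_mem x w).
Proof.
have HM' := HM; case: HM' => [As [L R]].
elim: w => [|y w IH] //; rewrite ev_cons IH /=.
by case: (y == x) => //; rewrite L add0n.
Qed.

Lemma cap_lemma (M : magma) (HM : is_monoid M) n c d :
  (forall z : M, mpow z n = mpow z n.+1) -> 0 < n ->
  (forall z : M, mpow z c = mpow z d) -> cap3 c <> cap3 d ->
  forall p q : M, mop (mpow p n) (mpow q n) = mpow (mop (mpow p n) (mpow q n)) n.
Proof.
move=> Hs Hn.
have HM' := HM; case: HM' => [As [L R]].
have key : forall c d, c < d -> (forall z : M, mpow z c = mpow z d) -> cap3 c <> cap3 d ->
  forall p q : M, mop (mpow p n) (mpow q n) = mpow (mop (mpow p n) (mpow q n)) n.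
  move=> {}c {}d Hcd Hz Hcap p q.
  case: c Hcd Hz Hcap => [|[|c]] Hcd Hz Hcap.
  - have E : forall z : M, mpow z n = munit M.
      move=> z; rewrite -(mpow_ge HM (Hs z) (_ : n <= d * n)); last by nia.
      by rewrite mpowM // -Hz; exact: mpow_unit HM n.
    by rewrite !E L.
  - apply: (mpow_collapse HM (Hs _) (_ : 2 <= d)).
      by case: d Hcd Hz Hcap => [|[|d]].
    by rewrite -Hz mpow1.
  - by case: d Hcd Hz Hcap => [|[|[|d]]].
move=> Hz Hcap; case: (ltngtP c d) => Hcd.
- exact: (key c d Hcd Hz Hcap).
- exact: (key d c Hcd (fun z => esym (Hz z)) (fun E => Hcap (esym E))).
- by rewrite Hcd in Hcap.
Qed.

Lemma core (M : magma) (HM : is_monoid M) n (U V : word) :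
  (forall z : M, mpow z n = mpow z n.+1) -> 0 < n ->
  all (fun z => z <= 1) U -> all (fun z => z <= 1) V ->
  (forall k : nat -> M, ev k U = ev k V) -> cW U <> None -> cW U <> cW V ->
  forall p q : M, mop (mpow p n) (mpow q n) = mpow (mop (mpow p n) (mpow q n)) n.
Proof.
move=> Hs Hn HU HV Hk HUn HUV p q.
have HM' := HM; case: HM' => [As [L R]].
case EU: (cW U) HUn HUV => [[i j]|] // _ HUV.
case EV: (cW V) HUV => [[i' j']|] HUV.
- have [Ei Ej] := L2 EU; have [Ei' Ej'] := L2 EV.
  case: (classic (i = i')) => Hi.
  + have Hj : j <> j' by move=> Hj; apply: HUV; rewrite Hi Hj.
    apply: (cap_lemma HM Hs Hn (c := count_mem 1 U) (d := count_mem 1 V)).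
      by move=> z; rewrite -!(ev_count HM) Hk.
    by rewrite -Ej -Ej'.
  + apply: (cap_lemma HM Hs Hn (c := count_mem 0 U) (d := count_mem 0 V)).
      by move=> z; rewrite -!(ev_count HM) Hk.
    by rewrite -Ei -Ei'.
- set X := mpow p n; set Y := mpow q n.
  have idem : forall z : M, mop (mpow z n) (mpow z n) = mpow z n.
    by move=> z; rewrite -mpowD // (mpow_ge HM (Hs z)) //; lia.
  have [a [b [HA [_ [Ha _]]]]] := AB HM (idem p) (idem q) HU.
  have [a' [b' [HA' [_ [Ha' _]]]]] := AB HM (idem p) (idem q) HV.
  rewrite EU /= in Ha; rewrite EV /= in Ha'.
  case: a Ha HA => // _ HA.
  rewrite Hk HA' (mpow1 HM) in HA.
  apply: (mpow_collapse HM (Hs _) (_ : 2 <= a'.+1)); last exact: esym HA.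
  by rewrite ltnS -Ha'.
Qed.


Lemma Mg_cls_some (W : word -> Prop) c (H : norm c = c /\ below W c) :
  Mg_cls W c = Some (exist _ c H).
Proof.
rewrite /Mg_cls; case: excluded_middle_informative => [H'|nH]; last by [].
by rewrite (proof_irrelevance _ H' H).
Qed.

Lemma Mg_cls_none (W : word -> Prop) c : ~ below W c -> Mg_cls W c = None.
Proof.
move=> nb; rewrite /Mg_cls; case: excluded_middle_informative => // H.
by case: nb; case: H.
Qed.

Definition r01 (a b : nat) : bool := (a <= b) && (b <= 1).
Definition good (w : word) : bool := path r01 0 w.

Lemma path_nseq x e rest : x <= 1 -> path r01 x (nseq e x ++ rest) = path r01 x rest.
Proof.
move=> Hx; elim: e => [|e IH] //=.
by rewrite IH /r01 leqnn Hx.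
Qed.

Lemma path_expand y xs es : size es = size xs -> all (fun e => 0 < e) es ->
  path r01 y (expand xs es) = path r01 y xs.
Proof.
elim: xs y es => [|x xs IH] y [|e es] //= [Hs] /andP [He Hes].
have -> : expand (x :: xs) (e :: es) = nseq e x ++ expand xs es by [].
case: e He => [|e] // _ /=.
case Hyx: (r01 y x) => //=.
have Hx : x <= 1 by move: Hyx; rewrite /r01 => /andP [].
by rewrite path_nseq // IH.
Qed.

Lemma gamma_good u v : gamma u v -> good u = good v.
Proof.
case=> _ [xs [es [fs [Hes [Hfs [Pe [Pf [-> ->]]]]]]]].
by rewrite /good !path_expand.
Qed.

Lemma path_r0 y w : path r01 y w -> path r01 0 w.
Proof. by case: w => [|z w] //= /andP [/andP [_ H1] H2]; rewrite /r01 H1 H2. Qed.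

Lemma below_good w : below W_xxyy w -> good w.
Proof.
case=> p [s [t [Wt G]]].
have : good (p ++ w ++ s) by rewrite (gamma_good G) -(gamma_good Wt).
rewrite /good cat_path => /andP [_]; rewrite cat_path => /andP [H _].
exact: path_r0 H.
Qed.

Lemma good1_form w : path r01 1 w -> w = nseq (count_mem 1 w) 1.
Proof.
elim: w => [|z w IH] //= /andP [Hz Hw].
have Ez : z = 1 by move: Hz; rewrite /r01; case: (z) => [|[|?]].
subst z; rewrite eqxx /= -IH //.
Qed.

Lemma good_form w : good w -> w = nseq (count_mem 0 w) 0 ++ nseq (count_mem 1 w) 1.
Proof.
rewrite /good; elim: w => [|z w IH] //= /andP [Hz Hw].
case: z Hz Hw => [|[|z]] //= _ Hw.
- by rewrite !add0n -IH.
- have E := good1_form Hw.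
  have C0 : count_mem 0 w = 0 by rewrite E count_nseq /= mul0n.
  by rewrite !add0n C0 /= -E.
Qed.


Lemma runs_cons x w : runs (x :: w) = match runs w with
  | (y, k) :: r' => if x == y then (y, k.+1) :: r' else (x, 1) :: runs w
  | [::] => [:: (x, 1)] end.
Proof. by []. Qed.

Lemma runs_head y r : exists k rs, runs (y :: r) = (y, k) :: rs.
Proof.
rewrite runs_cons; case: (runs r) => [|[y' k'] rs]; first by exists 1, [::].
case: eqP => [->|_]; by eauto.
Qed.

Lemma runs_nseq a x r : (forall y r', r = y :: r' -> y != x) ->
  runs (nseq a.+1 x ++ r) = (x, a.+1) :: runs r.
Proof.
move=> Hr; elim: a => [|a IH].
- rewrite [nseq _ _ ++ _]/= runs_cons; case: r Hr => [|y r'] Hr //.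
  have [k [rs ->]] := runs_head y r'.
  by have := Hr y r' erefl; rewrite eq_sym => /negbTE ->.
- by rewrite [nseq _ _ ++ _]/= runs_cons -[x :: _]/(nseq a.+1 x ++ r) IH eqxx.
Qed.

Lemma runs01 a b : runs (nseq a 0 ++ nseq b 1) = [seq p <- [:: (0,a); (1,b)] | 0 < p.2].
Proof.
case: a => [|a]; case: b => [|b] //.
- have -> : nseq 0 0 ++ nseq b.+1 1 = nseq b.+1 1 ++ [::] by rewrite cats0.
  by rewrite runs_nseq.
- have -> : nseq a.+1 0 ++ nseq 0 1 = nseq a.+1 0 ++ [::] by [].
  by rewrite runs_nseq.
- rewrite runs_nseq; last by move=> y r' [<- _].
  have -> : nseq b.+1 1 = nseq b.+1 1 ++ [::] by rewrite cats0.
  by rewrite runs_nseq.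
Qed.

Lemma norm_form a b : norm (nseq a 0 ++ nseq b 1) = sig (Some (cap3 a, cap3 b)).
Proof.
have S0 : simple 0 (nseq a 0 ++ nseq b 1) = (a == 1).
  by rewrite /simple count_cat !count_nseq /= mul1n mul0n addn0.
have S1 : simple 1 (nseq a 0 ++ nseq b 1) = (b == 1).
  by rewrite /simple count_cat !count_nseq /= mul1n mul0n add0n.
rewrite /norm runs01.
by case: a S0 S1 => [|[|a]]; case: b => [|[|b]] /= S0 S1; rewrite ?S0 ?S1 //=.
Qed.

Lemma nseq_app2 b (x : nat) : nseq b x ++ [:: x; x] = nseq b.+2 x.
Proof. by elim: b => [|b IH] //=; rewrite IH. Qed.

Lemma below_form a b : below W_xxyy (nseq a 0 ++ nseq b 1).
Proof.
exists [:: 0; 0], [:: 1; 1], (nseq a.+2 0 ++ nseq b.+2 1).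
have Ht : forall xs es, size es = size xs -> all (fun e => 0 < e) es ->
   gamma (expand xs es) (expand xs es).
  by move=> xs es H1 H2; split=> //; exists xs, es, es.
have E : nseq a.+2 0 ++ nseq b.+2 1 = expand [:: 0; 1] [:: a.+2; b.+2].
  by rewrite /expand /= cats0.
split.
- rewrite /W_xxyy; split.
    move=> x; rewrite /simple count_cat !count_nseq.
    by case: x => [|[|x]] /=; rewrite ?mul1n ?mul0n ?addn0 ?add0n.
  exists [:: 0; 1], [:: 2; 2], [:: a.+2; b.+2]; do !split => //.
- have -> : [:: 0; 0] ++ (nseq a 0 ++ nseq b 1) ++ [:: 1; 1] = nseq a.+2 0 ++ nseq b.+2 1.
    by rewrite -catA nseq_app2.
  by rewrite E; apply: Ht.
Qed.


Definition MG : magma := Mgamma W_xxyy.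
Definition phi (t : T) : MG := Mg_cls W_xxyy (sig t).

Lemma sig_canon i j : norm (sig (Some (i, j))) = sig (Some (i, j)) /\ below W_xxyy (sig (Some (i, j))).
Proof.
split; last exact: below_form.
by rewrite /sig norm_form; case: i; case: j.
Qed.

Lemma phi_none : phi None = None.
Proof.
apply: Mg_cls_none => /below_good; by [].
Qed.

Lemma hom_aux s t : s <> None -> t <> None ->
  norm (sig s ++ sig t) = sig (mulT s t) \/
  (mulT s t = None /\ good (norm (sig s ++ sig t)) = false).
Proof.
case: s => [[[] []]|] _; try by [];
case: t => [[[] []]|] _; try by [];
  first [left; reflexivity | right; split; reflexivity].
Qed.

Lemma phi_hom s t : phi (mulT s t) = mop (m:=MG) (phi s) (phi t).
Proof.
case: s => [[i j]|]; last by rewrite phi_none.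
case: t => [[k l]|]; last first.
  by rewrite /phi (Mg_cls_some (sig_canon i j)) -/(phi None) phi_none; case: (pos3 j).
have /= := @hom_aux (Some (i,j)) (Some (k,l)).
rewrite /phi (Mg_cls_some (sig_canon i j)) (Mg_cls_some (sig_canon k l)) /=.
case=> // [E|[E G]]; first by rewrite E.
rewrite E -/(phi None) phi_none Mg_cls_none //.
by move=> /below_good; rewrite G.
Qed.

Lemma phi_one : phi oneT = munit MG.
Proof. by []. Qed.

Definition psi (m : MG) : T := match m with None => None | Some x => cW (sval x) end.

Lemma phi_psi m : phi (psi m) = m.
Proof.
case: m => [[w H]|]; last exact: phi_none.
have Hg := below_good H.2.
have Ew := good_form Hg.
set t := Some (cap3 (count_mem 0 w), cap3 (count_mem 1 w)).
have Es : sig t = w by rewrite -norm_form -Ew H.1.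
rewrite /psi /=.
have -> : cW w = t by rewrite -Es cW_sig.
by rewrite /phi Es; apply: Mg_cls_some.
Qed.

Lemma MG_monoid : is_monoid MG.
Proof.
have [As [L R]] := TM_monoid.
split; last split.
- move=> a b c; rewrite -(phi_psi a) -(phi_psi b) -(phi_psi c) -!phi_hom.
  by congr phi; apply: As.
- move=> a; rewrite -(phi_psi a) -phi_one -phi_hom; congr phi; apply: L.
- move=> a; rewrite -(phi_psi a) -phi_one -phi_hom; congr phi; apply: R.
Qed.

Lemma phi_ev (f : nat -> T) w : phi (ev (M:=TM) f w) = ev (M:=MG) (fun z => phi (f z)) w.
Proof.
elim: w => [|z w IH] //.
by rewrite !ev_cons -IH -phi_hom.
Qed.

Lemma transfer i : sat TM i -> sat MG i.
Proof.
move=> H f.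
rewrite !(eq_ev (f := f) (g := fun z => phi (psi (f z)))); last by move=> z; rewrite phi_psi.
  by rewrite -!phi_ev H.
by move=> z; rewrite phi_psi.
Qed.


Lemma all_flat01 (g : nat -> T) u :
  all (fun z => z <= 1) (flatten (map (fun z => sig (g z)) u)).
Proof.
elim: u => [|z u IH] //=; by rewrite all_cat sig01 IH.
Qed.

Lemma core3 (M : magma) (HM : is_monoid M) n (u v : word) (g : nat -> T) :
  (forall z : M, mpow z n = mpow z n.+1) -> 0 < n ->
  (forall f : nat -> M, ev f u = ev f v) ->
  ev (M:=TM) g u <> None -> ev (M:=TM) g u <> ev (M:=TM) g v ->
  forall p q : M, mop (mpow p n) (mpow q n) = mpow (mop (mpow p n) (mpow q n)) n.
Proof.
move=> Hs Hn Hsat Hu Huv.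
set U := flatten (map (fun z => sig (g z)) u).
set V := flatten (map (fun z => sig (g z)) v).
have EcW : forall w, cW (flatten (map (fun z => sig (g z)) w)) = ev (M:=TM) g w.
  move=> w; rewrite /cW ev_flat; last exact: TM_monoid.
  exact: (@eq_ev TM _ g w (fun z => cW_sig (g z))).
apply: (core HM Hs Hn (U := U) (V := V)).
- exact: all_flat01.
- exact: all_flat01.
- by move=> k; rewrite /U /V !ev_flat //.
- by rewrite /U EcW.
- by rewrite /U /V !EcW.
Qed.

Lemma core2 (M : magma) (HM : is_monoid M) n (u v : word) (g : nat -> T) :
  (forall z : M, mpow z n = mpow z n.+1) -> 0 < n ->
  (forall f : nat -> M, ev f u = ev f v) ->
  ev (M:=TM) g u <> ev (M:=TM) g v ->
  forall p q : M, mop (mpow p n) (mpow q n) = mpow (mop (mpow p n) (mpow q n)) n.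
Proof.
move=> Hs Hn Hsat Huv.
case Eu: (ev (M:=TM) g u) Huv => [x|] Huv.
- by apply: (core3 HM Hs Hn Hsat (g := g)); rewrite Eu.
- apply: (core3 HM Hs Hn (u := v) (v := u) (g := g)).
  + by move=> f; rewrite Hsat.
  + by move=> E; apply: Huv; rewrite E.
  + by rewrite Eu => E; apply: Huv; rewrite E.
Qed.

Unset Implicit Arguments.
Theorem lemma4p1 (Sigma : identity -> Prop) (n : nat) :
  Vsat Sigma (nseq n 0, nseq n.+1 0) ->
  ~ inV Sigma (Mgamma W_xxyy) ->
  Vsat Sigma (nseq n 0 ++ nseq n 1, wpow (nseq n 0 ++ nseq n 1) n).
Proof.
move=> Hn Hnot M HM f.
case: n Hn => [|n] Hn; first by [].
have HMm := HM.1.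
have Hs : forall z : M, mpow z n.+1 = mpow z n.+2.
  move=> z; have H : ev (fun _ => z) (nseq n.+1 0) = ev (fun _ => z) (nseq n.+2 0)
    := Hn M HM (fun _ => z).
  by rewrite !ev_nseq in H.
change (ev f (nseq n.+1 0 ++ nseq n.+1 1) = ev f (wpow (nseq n.+1 0 ++ nseq n.+1 1) n.+1)).
rewrite ev_wpow // ev_cat // !ev_nseq.
case: (classic (forall i, Sigma i -> sat TM i)) => HT.
  exfalso; apply: Hnot; split; first exact: MG_monoid.
  by move=> i Si; apply: transfer; apply: HT.
have [i Hi] : exists i, ~ (Sigma i -> sat TM i) by apply: not_all_ex_not.
have Si : Sigma i by apply: NNPP => C; apply: Hi => /C.
have [g Hg] : exists g, ~ (ev (M:=TM) g i.1 = ev (M:=TM) g i.2).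
  by apply: not_all_ex_not => C; apply: Hi => _; exact: C.
exact: (core2 HMm Hs (ltn0Sn n) (HM.2 i Si) Hg).
Qed.
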